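(* Let $\xi,\zeta$ be admissible families with $E[\operatorname{ess\,sup}_{\theta\in\mathcal T}(\xi(\theta))^-]<+\infty$, $E[\operatorname{ess\,sup}_{\theta\in\mathcal T}(\zeta(\theta))^+]<+\infty$ and $\xi(T)=\zeta(T)=0$ a.s., and let $J_n,J'_n$ ($n\in\mathbb N$) be defined by $J_0=J'_0=0$, $J_{n+1}(\theta)=\operatorname{ess\,sup}_{\tau\in\mathcal T_\theta}E[J'_n(\tau)+\xi(\tau)\mid\mathcal F_\theta]$, $J'_{n+1}(\theta)=\operatorname{ess\,sup}_{\sigma\in\mathcal T_\theta}E[J_n(\sigma)-\zeta(\sigma)\mid\mathcal F_\theta]$. Then the sequences $(J_n)_{n\in\mathbb N}$ and $(J'_n)_{n\in\mathbb N}$ are almost surely non-decreasing: for each $n$ and each $\theta\in\mathcal T$, $J_n(\theta)\le J_{n+1}(\theta)$ and $J'_n(\theta)\le J'_{n+1}(\theta)$ a.s.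
   Context: Filtered probability space $(\Omega,\mathcal F,(\mathcal F_t)_{0\le t\le T},P)$ satisfying the usual conditions, $\mathcal F=\mathcal F_T$, $\mathcal F_0$ trivial, $T\in(0,\infty)$. $\mathcal T$: stopping times valued in $[0,T]$; $\mathcal T_S=\{\theta\in\mathcal T:\theta\ge S\text{ a.s.}\}$. A family $\phi=(\phi(\theta),\theta\in\mathcal T)$ of $\overline{\mathbb R}$-valued random variables is admissible if each $\phi(\theta)$ is $\mathcal F_\theta$-measurable and $\phi(\theta)=\phi(\theta')$ a.s. on $\{\theta=\theta'\}$. *)

(* Defs.v *)
From HB Require Import structures.
From mathcomp Require Import all_boot all_order all_algebra.
From mathcomp Require Import all_classical all_reals all_analysis measurable_realfun.
Set Implicit Arguments. Unset Strict Implicit. Unset Printing Implicit Defensive.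
Import Order.TTheory GRing.Theory Num.Theory.
Local Open Scope classical_set_scope.
Local Open Scope ring_scope.
Local Open Scope ereal_scope.

(* F_t is represented as a family
   of sub-sigma-algebras Fil t of the measurable sets of Omega. *)
Definition filtration_usual {d} {Omega : measurableType d} {R : realType}
  (P : probability Omega R) (Tm : R) (Fil : R -> set (set Omega)) : Prop :=
  [/\ (0 < Tm)%R,
      (forall t, (0 <= t <= Tm)%R -> sigma_algebra setT (Fil t)),
      (forall s t, (0 <= s)%R -> (s <= t)%R -> (t <= Tm)%R -> Fil s `<=` Fil t) &
      Fil Tm = measurable] /\
  [/\ (* completeness: F_0 (hence every F_t, and F) contains all P-null sets *)
      (forall N, P.-negligible N -> Fil 0%R N),
      (* right-continuity *)
      (forall t, (0 <= t)%R -> (t < Tm)%R -> forall A,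
          (forall s, (t < s)%R -> (s <= Tm)%R -> Fil s A) -> Fil t A) &
      (forall A, Fil 0%R A -> P A = 0 \/ P A = 1)].

Definition stopping_time {Omega : Type} {R : realType} (Tm : R)
  (Fil : R -> set (set Omega)) (theta : Omega -> R) : Prop :=
  (forall x, 0 <= theta x <= Tm)%R /\
  (forall t, (0 <= t <= Tm)%R -> Fil t [set x | (theta x <= t)%R]).

Definition Fstop {Omega : Type} {R : realType} (Tm : R)
  (Fil : R -> set (set Omega)) (theta : Omega -> R) : set (set Omega) :=
  [set A | Fil Tm A /\ forall t, (0 <= t <= Tm)%R ->
      Fil t (A `&` [set x | (theta x <= t)%R])].

Definition stop_after {d} {Omega : measurableType d} {R : realType}
  (P : probability Omega R) (Tm : R) (Fil : R -> set (set Omega))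
  (S : Omega -> R) : set (Omega -> R) :=
  [set theta | stopping_time Tm Fil theta /\ {ae P, forall x, (S x <= theta x)%R}].

Definition meas_wrt {Omega : Type} {R : realType} (G : set (set Omega))
  (Y : Omega -> \bar R) : Prop :=
  forall B : set (\bar R), measurable B -> G (Y @^-1` B).

Definition admissible {d} {Omega : measurableType d} {R : realType}
  (P : probability Omega R) (Tm : R) (Fil : R -> set (set Omega))
  (phi : (Omega -> R) -> Omega -> \bar R) : Prop :=
  (forall theta, stopping_time Tm Fil theta -> meas_wrt (Fstop Tm Fil theta) (phi theta)) /\
  (forall theta theta', stopping_time Tm Fil theta -> stopping_time Tm Fil theta' ->
     {ae P, forall x, theta x = theta' x -> phi theta x = phi theta' x}).

(* Y is a version of the (generalized) conditional expectation E[X | G],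
   for X whose negative part is integrable: Y is G-measurable, has integrable
   negative part, and has the same integral as X on every set of G. *)
Definition cond_exp {d} {Omega : measurableType d} {R : realType}
  (P : probability Omega R) (G : set (set Omega)) (X Y : Omega -> \bar R) : Prop :=
  [/\ meas_wrt G Y,
      P.-integrable setT (Y^\-) &
      forall A, G A -> \int[P]_(x in A) Y x = \int[P]_(x in A) X x].

Definition ess_sup_fam {d} {Omega : measurableType d} {R : realType} {I : Type}
  (P : probability Omega R) (S : set I) (X : I -> Omega -> \bar R)
  (Y : Omega -> \bar R) : Prop :=
  [/\ measurable_fun setT Y,
      (forall i, S i -> {ae P, forall x, X i x <= Y x}) &
      (forall Z : Omega -> \bar R, measurable_fun setT Z ->
         (forall i, S i -> {ae P, forall x, X i x <= Z x}) ->
         {ae P, forall x, Y x <= Z x})].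

(* J_{n+1}(theta) = ess sup_{tau in T_theta} E[ Xfam tau | F_theta ] *)
Definition snell_step {d} {Omega : measurableType d} {R : realType}
  (P : probability Omega R) (Tm : R) (Fil : R -> set (set Omega))
  (Xfam : (Omega -> R) -> Omega -> \bar R) (theta : Omega -> R)
  (Y : Omega -> \bar R) : Prop :=
  exists C : (Omega -> R) -> Omega -> \bar R,
    (forall tau, stop_after P Tm Fil theta tau ->
       cond_exp P (Fstop Tm Fil theta) (Xfam tau) (C tau)) /\
    ess_sup_fam P (stop_after P Tm Fil theta) C Y.

(* Main.v *)
Require Import Defs.
From HB Require Import structures.
From mathcomp Require Import all_boot all_order all_algebra.
From mathcomp Require Import all_classical all_reals all_analysis measurable_realfun.
Import Order.TTheory GRing.Theory Num.Theory.
Local Open Scope classical_set_scope.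
Local Open Scope ring_scope.
Local Open Scope ereal_scope.
Set Implicit Arguments. Unset Strict Implicit.

Lemma gmeasE (T : pointedType) (G : set (set T)) : sigma_algebra setT G ->
  forall A, G A = @measurable _ (g_sigma_algebraType G) A.
Proof. by move=> sG A; rewrite measurable_g_measurableTypeE. Qed.

Lemma Fstop_sigma d (Omega : measurableType d) (R : realType)
  (P : probability Omega R) (Tm : R) (Fil : R -> set (set Omega)) theta :
  filtration_usual P Tm Fil -> stopping_time Tm Fil theta ->
  sigma_algebra setT (Fstop Tm Fil theta).
Proof.
case=> [[Tm0 sFil _ FTm] _] [thb thm].
have sT : sigma_algebra setT (Fil Tm) by apply: sFil; rewrite lexx ltW.
split.
- split; first by case: sT.
  by move=> t tb; rewrite set0I; case: (sFil t tb).
- move=> A [FA HA]; split; first by case: sT => _ + _; apply.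
  move=> t tb; rewrite (@gmeasE _ _ (sFil t tb)).
  have -> : (setT `\` A) `&` [set x | (theta x <= t)%R] =
     [set x | (theta x <= t)%R] `\` (A `&` [set x | (theta x <= t)%R]).
    by apply/seteqP; split => x /=; tauto.
  apply: measurableD; rewrite -(@gmeasE _ _ (sFil t tb)); [exact: thm | exact: HA].
- move=> A HA; split.
    by case: sT => _ _; apply => n; case: (HA n).
  move=> t tb; rewrite setI_bigcupl (@gmeasE _ _ (sFil t tb)).
  by apply: bigcupT_measurable => n; rewrite -(@gmeasE _ _ (sFil t tb)); case: (HA n) => _; apply.
Qed.

Lemma Fstop_sub d (Omega : measurableType d) (R : realType)
  (P : probability Omega R) (Tm : R) (Fil : R -> set (set Omega)) theta :
  filtration_usual P Tm Fil -> Fstop Tm Fil theta `<=` measurable.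
Proof. by case=> [[_ _ _ FTm] _] A [+ _]; rewrite FTm. Qed.

Lemma meas_wrt_mfun d (Omega : measurableType d) (R : realType)
  (G : set (set Omega)) (Y : Omega -> \bar R) :
  G `<=` measurable -> meas_wrt G Y -> measurable_fun setT Y.
Proof. by move=> GM mY _ B mB; rewrite setTI; apply: GM; apply: mY. Qed.

Lemma meas_wrt_g (Omega : pointedType) (R : realType)
  (G : set (set Omega)) (Y : Omega -> \bar R) :
  meas_wrt G Y -> @measurable_fun _ _ (g_sigma_algebraType G) _ setT Y.
Proof. by move=> mY _ B mB; rewrite setTI; apply: sub_sigma_algebra; apply: mY. Qed.
Lemma le_int_ae d (T : measurableType d) (R : realType) (mu : {measure set T -> \bar R})
  (D : set T) (f g : T -> \bar R) : measurable D -> measurable_fun D f -> measurable_fun D g ->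
  {ae mu, forall x, D x -> f x <= g x} ->
  \int[mu]_(x in D) f x <= \int[mu]_(x in D) g x.
Proof.
move=> mD mf mg fg; rewrite (integralE _ _ f) (integralE _ _ g).
apply: leeB.
- apply: (@ae_ge0_le_integral _ _ _ mu D mD (f^\+) (g^\+)).
  + by move=> x _; exact: funepos_ge0.
  + exact: measurable_funepos.
  + by move=> x _; exact: funepos_ge0.
  + exact: measurable_funepos.
  apply: filterS fg => x H Dx; have := @funepos_le _ _ [set x] f g; apply.
    by move=> y; rewrite inE => ->; exact: H.
  by rewrite inE.
- apply: (@ae_ge0_le_integral _ _ _ mu D mD (g^\-) (f^\-)).
  + by move=> x _; exact: funeneg_ge0.
  + exact: measurable_funeneg.
  + by move=> x _; exact: funeneg_ge0.
  + exact: measurable_funeneg.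
  apply: filterS fg => x H Dx; have := @funeneg_le _ _ [set x] f g; apply.
    by move=> y; rewrite inE => ->; exact: H.
  by rewrite inE.
Qed.
Lemma cexp_mono d (Omega : measurableType d) (R : realType) (P : probability Omega R)
  (G : set (set Omega)) (X1 X2 Y1 Y2 : Omega -> \bar R) :
  sigma_algebra setT G -> G `<=` measurable ->
  measurable_fun setT X1 -> measurable_fun setT X2 ->
  {ae P, forall x, X1 x <= X2 x} ->
  cond_exp P G X1 Y1 -> cond_exp P G X2 Y2 -> {ae P, forall x, Y1 x <= Y2 x}.
Proof.
move=> sG GM mX1 mX2 X12 [mY1 iY1 h1] [mY2 iY2 h2].
have mY1' := meas_wrt_mfun GM mY1.
have mY2' := meas_wrt_mfun GM mY2.
have gY1 := meas_wrt_g mY1.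
have gY2 := meas_wrt_g mY2.
pose E (k : nat) := [set x | - k%:R%:E <= Y2 x] `&` [set x | Y2 x <= k%:R%:E] `&`
   [set x | Y2 x + (k.+1%:R^-1)%:E <= Y1 x].
have LE (f g : Omega -> \bar R) : @measurable_fun _ _ (g_sigma_algebraType G) _ setT f ->
   @measurable_fun _ _ (g_sigma_algebraType G) _ setT g -> G [set x | f x <= g x].
  move=> mf mg; rewrite (gmeasE sG) -(setTI [set x | _]).
  exact: measurable_lee.
have mc (c : \bar R) : @measurable_fun _ _ (g_sigma_algebraType G) _ setT (fun _ : Omega => c).
  exact: measurable_cst.
have GE k : G (E k).
  rewrite /E (gmeasE sG); apply: measurableI; [apply: measurableI|];
    rewrite -(gmeasE sG); apply: LE => //.
  exact: emeasurable_funD gY2 (mc _).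
have PE k : P (E k) = 0.
  have mE := GM _ (GE k).
  have i2 : P.-integrable (E k) Y2.
    apply/integrableP; split; first exact: measurable_funS mY2'.
    apply: (@le_lt_trans _ _ (\int[P]_(x in E k) (cst (k%:R%:E)) x)).
      apply: ge0_le_integral => //.
      - apply: measurableT_comp => //; exact: measurable_funS mY2'.
      - move=> x [[]]; rewrite /=; case: (Y2 x) => [y||] //=; rewrite !lee_fin => a b _.
        by rewrite ler_norml a b.
    rewrite integral_cst // ltey_eq fin_numM //.
    exact: fin_num_measure.
  have ineq : \int[P]_(x in E k) Y1 x <= \int[P]_(x in E k) Y2 x.
    rewrite h1 // h2 //; apply: le_int_ae => //.
    - exact: measurable_funS mX1.
    - exact: measurable_funS mX2.
    - by apply: filterS X12 => x H _.
  have ineq2 : \int[P]_(x in E k) (Y2 x + (k.+1%:R^-1)%:E) <= \int[P]_(x in E k) Y1 x.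
    apply: le_int_ae => //.
    - apply: emeasurable_funD; [exact: measurable_funS mY2' | exact: measurable_cst].
    - exact: measurable_funS mY1'.
    - by apply: aeW => x [_ H].
  rewrite integralD // in ineq2; last exact: finite_measure_integrable_cst.
  have fin := integrable_fin_num mE i2.
  have := le_trans ineq2 ineq.
  rewrite (_ : \int[P]_(x in E k) (k.+1%:R^-1)%:E = (k.+1%:R^-1)%:E * P (E k)); last first.
    exact: integral_cst.
  rewrite -[leRHS]adde0 leeD2lE // pmule_rle0 ?lte_fin ?invr_gt0 ?ltr0n // => H.
  by apply/eqP; rewrite -measure_le0.
have N1 : P.-negligible (\bigcup_k E k).
  apply: negligible_bigcup => k; exists (E k); split; [exact: GM (GE k) | exact: PE | by []].
have N1' : {ae P, forall x, ~ (\bigcup_k E k) x}.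
  by apply: negligibleS N1 => x /=; apply: contrapT.
have N2 : {ae P, forall x, Y2^\- x \is a fin_num}.
  have := integrable_ae measurableT iY2; apply: filterS => x; apply; done.
apply: filterS2 N2 N1' => x fx nE; rewrite leNgt; apply/negP => lt.
apply: nE; move: fx lt; rewrite funenegE.
case eY2: (Y2 x) => [y||] //=; last by rewrite ltNge leey.
move=> _ lt.
have [k2 Hk2] : exists k2 : nat, y%:E + (k2.+1%:R^-1)%:E <= Y1 x.
  move: lt; case: (Y1 x) => [z||] //=.
    rewrite lte_fin => /ltr_add_invr [k Hk]; exists k.
    by rewrite -EFinD lee_fin ltW.
  by exists 0%N; rewrite leey.
have [k1 Hk1] : exists k1 : nat, (`|y| < k1%:R)%R.
  by eexists; apply: archi_boundP; exact: normr_ge0.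
exists (maxn k1 k2) => //; rewrite /E /= eY2.
have hy : (`|y| <= (maxn k1 k2)%:R)%R.
  by rewrite (le_trans (ltW Hk1)) // ler_nat leq_maxl.
move: hy; rewrite ler_norml => /andP[a b].
split; [split|]; rewrite ?lee_fin //.
by apply: le_trans Hk2; rewrite leeD2l // lee_fin lef_pV2 ?posrE // ler_nat ltnS leq_maxr.
Qed.

Lemma cexp_zero d (Omega : measurableType d) (R : realType) (P : probability Omega R)
  (G : set (set Omega)) : sigma_algebra setT G -> cond_exp P G (cst 0) (cst 0).
Proof.
move=> [s0 sC _]; split.
- move=> B mB; rewrite preimage_cst; case: ifP => _ //.
  by rewrite -(setD0 setT); exact: sC.
- have -> : (@cst Omega (\bar R) 0)^\- = cst 0.
    by apply/funext => x; rewrite funenegE /= oppr0 maxxx.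
  exact: integrable0.
- by [].
Qed.

Unset Implicit Arguments.

Theorem lemma2p2 (d : measure_display) (Omega : measurableType d) (R : realType)
  (P : probability Omega R) (Tm : R) (Fil : R -> set (set Omega))
  (xi zeta : (Omega -> R) -> Omega -> \bar R)
  (J J' : nat -> (Omega -> R) -> Omega -> \bar R) :
  filtration_usual P Tm Fil ->
  admissible P Tm Fil xi -> admissible P Tm Fil zeta ->
  (exists Y, ess_sup_fam P (stopping_time Tm Fil) (fun th => (xi th)^\-) Y /\
             \int[P]_x Y x < +oo) ->
  (exists Y, ess_sup_fam P (stopping_time Tm Fil) (fun th => (zeta th)^\+) Y /\
             \int[P]_x Y x < +oo) ->
  {ae P, forall x, xi (fun _ => Tm) x = 0} ->
  {ae P, forall x, zeta (fun _ => Tm) x = 0} ->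
  (forall theta, J 0%N theta = cst 0) ->
  (forall theta, J' 0%N theta = cst 0) ->
  (forall n theta, stopping_time Tm Fil theta ->
     snell_step P Tm Fil (fun tau x => J' n tau x + xi tau x) theta (J n.+1 theta)) ->
  (forall n theta, stopping_time Tm Fil theta ->
     snell_step P Tm Fil (fun sigma x => J n sigma x - zeta sigma x) theta (J' n.+1 theta)) ->
  forall n theta, stopping_time Tm Fil theta ->
    {ae P, forall x, J n theta x <= J n.+1 theta x} /\
    {ae P, forall x, J' n theta x <= J' n.+1 theta x}.
Proof.
move=> hF [adx1 _] [adz1 _] _ _ xiT zeT J0 J'0 HJ HJ'.
have mJ n tau : stopping_time Tm Fil tau ->
    measurable_fun setT (J n tau) /\ measurable_fun setT (J' n tau).
  case: n => [|n] st; first by rewrite J0 J'0; split; exact: measurable_cst.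
  have [C [_ [m _ _]]] := HJ n tau st.
  have [C' [_ [m' _ _]]] := HJ' n tau st.
  by split.
have mxi tau : stopping_time Tm Fil tau -> measurable_fun setT (xi tau).
  by move=> st; apply: (meas_wrt_mfun (Fstop_sub hF)); exact: adx1.
have mze tau : stopping_time Tm Fil tau -> measurable_fun setT (zeta tau).
  by move=> st; apply: (meas_wrt_mfun (Fstop_sub hF)); exact: adz1.
have stT : stopping_time Tm Fil (fun _ => Tm).
  case: (hF) => [[Tm0 sFil _ _] _]; split => [x|t tb]; first by rewrite lexx ltW.
  have [s0 sC _] := sFil t tb.
  have [eT|ne] := eqVneq t Tm.
    rewrite (_ : [set x | _] = setT); last by apply/seteqP; split => x //= _; rewrite eT.
    by rewrite -(setD0 setT); exact: sC.
  rewrite (_ : [set x | _] = set0) //; apply/seteqP; split => x //=.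
  case/andP: tb => _ tb; move=> h; have : t = Tm by apply/le_anti; rewrite tb h.
  by move/eqP; rewrite (negbTE ne).
have stTa theta : stopping_time Tm Fil theta -> stop_after P Tm Fil theta (fun _ => Tm).
  move=> st; split => //; apply: aeW => x.
  by case: st => /(_ x) /andP[_ ?].
elim => [|n IH] theta st.
  split.
  - have [C [hC [_ up _]]] := HJ 0%N theta st.
    have c1 : {ae P, forall x, cst 0 x <= C (fun _ => Tm) x}.
      apply: (cexp_mono (Fstop_sigma hF st) (Fstop_sub hF) _ _ _
        (cexp_zero P (Fstop_sigma hF st)) (hC _ (stTa theta st))).
      + exact: measurable_cst.
      + apply: emeasurable_funD; [exact: (mJ 0%N _ stT).2 | exact: mxi].
      + by apply: filterS xiT => x ->; rewrite J'0 /= adde0.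
    apply: filterS2 c1 (up _ (stTa theta st)) => x; rewrite J0; exact: le_trans.
  - have [C [hC [_ up _]]] := HJ' 0%N theta st.
    have c1 : {ae P, forall x, cst 0 x <= C (fun _ => Tm) x}.
      apply: (cexp_mono (Fstop_sigma hF st) (Fstop_sub hF) _ _ _
        (cexp_zero P (Fstop_sigma hF st)) (hC _ (stTa theta st))).
      + exact: measurable_cst.
      + apply: emeasurable_funB; [exact: (mJ 0%N _ stT).1 | exact: mze].
      + apply: filterS zeT => x ->; by rewrite J0 /= oppr0 adde0.
    apply: filterS2 c1 (up _ (stTa theta st)) => x; rewrite J'0; exact: le_trans.
split.
- have [C [hC [_ _ least]]] := HJ n theta st.
  have [C2 [hC2 [m2 up2 _]]] := HJ n.+1 theta st.
  apply: least => // tau sttau; case: (sttau) => st' _.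
  have := cexp_mono (Fstop_sigma hF st) (Fstop_sub hF) _ _ _ (hC _ sttau) (hC2 _ sttau).
  move=> /(_ _ _ _) H; apply: filterS2 (up2 _ sttau) (H _ _ _) => [x a b|||].
  + exact: le_trans b a.
  + apply: emeasurable_funD; [exact: (mJ n _ st').2 | exact: mxi].
  + apply: emeasurable_funD; [exact: (mJ n.+1 _ st').2 | exact: mxi].
  + have [_ IHJ'] := IH tau st'; apply: filterS IHJ' => x H'; exact: leeD2r.
- have [C [hC [_ _ least]]] := HJ' n theta st.
  have [C2 [hC2 [m2 up2 _]]] := HJ' n.+1 theta st.
  apply: least => // tau sttau; case: (sttau) => st' _.
  have := cexp_mono (Fstop_sigma hF st) (Fstop_sub hF) _ _ _ (hC _ sttau) (hC2 _ sttau).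
  move=> /(_ _ _ _) H; apply: filterS2 (up2 _ sttau) (H _ _ _) => [x a b|||].
  + exact: le_trans b a.
  + apply: emeasurable_funB; [exact: (mJ n _ st').1 | exact: mze].
  + apply: emeasurable_funB; [exact: (mJ n.+1 _ st').1 | exact: mze].
  + have [IHJ _] := IH tau st'; apply: filterS IHJ => x H'; exact: leeD2r.
Qed.
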